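(* There exists a PBD$(53,\{3,5\})$ of dimension three.
   Context: For a positive integer $v$ and $K \subseteq \{2,3,4,\dots\}$, a pairwise balanced design PBD$(v,K)$ is a pair $(X,\mathcal{B})$ where $X$ is a $v$-set of points and $\mathcal{B}$ is a family of subsets of $X$ (blocks), each of size in $K$, such that any two distinct points of $X$ lie together in exactly one block. A flat (subdesign) is a pair $(Y,\mathcal{B}_Y)$ with $Y \subseteq X$ and $\mathcal{B}_Y = \{B \in \mathcal{B} : B \subseteq Y\}$ such that any two distinct points of $Y$ lie together in exactly one block of $\mathcal{B}_Y$; it is proper if $Y \ne X$. The dimension of the PBD is the maximum integer $d$ such that every set of $d$ points is contained in a proper flat. *)

(* Defs.v *)
From mathcomp Require Import all_boot.
Set Implicit Arguments. Unset Strict Implicit. Unset Printing Implicit Defensive.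

Section PBD.
Variable T : finType.

Definition is_PBD (K : pred nat) (B : {set {set T}}) : Prop :=
  (forall b, b \in B -> K #|b|) /\
  (forall x y : T, x != y ->
     #|[set b in B | (x \in b) && (y \in b)]| = 1).

Definition is_flat (B : {set {set T}}) (Y : {set T}) : Prop :=
  forall x y : T, x \in Y -> y \in Y -> x != y ->
    #|[set b in B | (b \subset Y) && ((x \in b) && (y \in b))]| = 1.

Definition is_proper_flat (B : {set {set T}}) (Y : {set T}) : Prop :=
  is_flat B Y /\ Y != [set: T].

Definition all_dsets_in_proper_flat (B : {set {set T}}) (d : nat) : Prop :=
  forall S : {set T}, #|S| = d ->
    exists Y : {set T}, is_proper_flat B Y /\ S \subset Y.

Definition has_dimension (B : {set {set T}}) (d : nat) : Prop :=
  d <= #|T| /\ all_dsets_in_proper_flat B d /\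
  (forall d', d' <= #|T| -> all_dsets_in_proper_flat B d' -> d' <= d).

End PBD.

(* Main.v *)
Require Import Defs.
From mathcomp Require Import all_boot.
Set Implicit Arguments. Unset Strict Implicit. Unset Printing Implicit Defensive.

(* The design: PG(3,4) minus the symmetric difference of
   two planes; flats used: planes of PG(3,4) restricted. *)

Definition BL : seq (seq nat) :=
  [:: [:: 0; 1; 2; 3; 4];
  [:: 0; 5; 6; 7; 8];
  [:: 0; 9; 10; 11; 12];
  [:: 0; 13; 14; 15; 16];
  [:: 0; 17; 18; 19; 20];
  [:: 0; 21; 22; 23; 24];
  [:: 0; 25; 26; 27; 28];
  [:: 0; 29; 30; 31; 32];
  [:: 0; 33; 34; 35; 36];
  [:: 0; 37; 38; 39; 40];
  [:: 0; 41; 42; 43; 44];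
  [:: 0; 45; 46; 47; 48];
  [:: 0; 49; 50; 51; 52];
  [:: 1; 5; 9; 13; 17];
  [:: 1; 6; 10; 14; 18];
  [:: 1; 7; 11; 15; 19];
  [:: 1; 8; 12; 16; 20];
  [:: 1; 21; 25; 29; 33];
  [:: 1; 22; 26; 30; 34];
  [:: 1; 23; 27; 31; 35];
  [:: 1; 24; 28; 32; 36];
  [:: 1; 37; 41; 45; 49];
  [:: 1; 38; 42; 46; 50];
  [:: 1; 39; 43; 47; 51];
  [:: 1; 40; 44; 48; 52];
  [:: 2; 5; 10; 15; 20];
  [:: 2; 6; 9; 16; 19];
  [:: 2; 7; 12; 13; 18];
  [:: 2; 8; 11; 14; 17];
  [:: 2; 21; 26; 31; 36];
  [:: 2; 22; 25; 32; 35];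
  [:: 2; 23; 28; 29; 34];
  [:: 2; 24; 27; 30; 33];
  [:: 2; 37; 42; 47; 52];
  [:: 2; 38; 41; 48; 51];
  [:: 2; 39; 44; 45; 50];
  [:: 2; 40; 43; 46; 49];
  [:: 3; 5; 11; 16; 18];
  [:: 3; 6; 12; 15; 17];
  [:: 3; 7; 9; 14; 20];
  [:: 3; 8; 10; 13; 19];
  [:: 3; 21; 27; 32; 34];
  [:: 3; 22; 28; 31; 33];
  [:: 3; 23; 25; 30; 36];
  [:: 3; 24; 26; 29; 35];
  [:: 3; 37; 43; 48; 50];
  [:: 3; 38; 44; 47; 49];
  [:: 3; 39; 41; 46; 52];
  [:: 3; 40; 42; 45; 51];
  [:: 4; 5; 12; 14; 19];
  [:: 4; 6; 11; 13; 20];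
  [:: 4; 7; 10; 16; 17];
  [:: 4; 8; 9; 15; 18];
  [:: 4; 21; 28; 30; 35];
  [:: 4; 22; 27; 29; 36];
  [:: 4; 23; 26; 32; 33];
  [:: 4; 24; 25; 31; 34];
  [:: 4; 37; 44; 46; 51];
  [:: 4; 38; 43; 45; 52];
  [:: 4; 39; 42; 48; 49];
  [:: 4; 40; 41; 47; 50];
  [:: 5; 21; 37];
  [:: 5; 22; 40];
  [:: 5; 23; 38];
  [:: 5; 24; 39];
  [:: 5; 25; 49];
  [:: 5; 26; 52];
  [:: 5; 27; 50];
  [:: 5; 28; 51];
  [:: 5; 29; 41];
  [:: 5; 30; 44];
  [:: 5; 31; 42];
  [:: 5; 32; 43];
  [:: 5; 33; 45];
  [:: 5; 34; 48];
  [:: 5; 35; 46];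
  [:: 5; 36; 47];
  [:: 6; 21; 39];
  [:: 6; 22; 38];
  [:: 6; 23; 40];
  [:: 6; 24; 37];
  [:: 6; 25; 51];
  [:: 6; 26; 50];
  [:: 6; 27; 52];
  [:: 6; 28; 49];
  [:: 6; 29; 43];
  [:: 6; 30; 42];
  [:: 6; 31; 44];
  [:: 6; 32; 41];
  [:: 6; 33; 47];
  [:: 6; 34; 46];
  [:: 6; 35; 48];
  [:: 6; 36; 45];
  [:: 7; 21; 40];
  [:: 7; 22; 37];
  [:: 7; 23; 39];
  [:: 7; 24; 38];
  [:: 7; 25; 52];
  [:: 7; 26; 49];
  [:: 7; 27; 51];
  [:: 7; 28; 50];
  [:: 7; 29; 44];
  [:: 7; 30; 41];
  [:: 7; 31; 43];
  [:: 7; 32; 42];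
  [:: 7; 33; 48];
  [:: 7; 34; 45];
  [:: 7; 35; 47];
  [:: 7; 36; 46];
  [:: 8; 21; 38];
  [:: 8; 22; 39];
  [:: 8; 23; 37];
  [:: 8; 24; 40];
  [:: 8; 25; 50];
  [:: 8; 26; 51];
  [:: 8; 27; 49];
  [:: 8; 28; 52];
  [:: 8; 29; 42];
  [:: 8; 30; 43];
  [:: 8; 31; 41];
  [:: 8; 32; 44];
  [:: 8; 33; 46];
  [:: 8; 34; 47];
  [:: 8; 35; 45];
  [:: 8; 36; 48];
  [:: 9; 21; 45];
  [:: 9; 22; 48];
  [:: 9; 23; 46];
  [:: 9; 24; 47];
  [:: 9; 25; 41];
  [:: 9; 26; 44];
  [:: 9; 27; 42];
  [:: 9; 28; 43];
  [:: 9; 29; 49];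
  [:: 9; 30; 52];
  [:: 9; 31; 50];
  [:: 9; 32; 51];
  [:: 9; 33; 37];
  [:: 9; 34; 40];
  [:: 9; 35; 38];
  [:: 9; 36; 39];
  [:: 10; 21; 47];
  [:: 10; 22; 46];
  [:: 10; 23; 48];
  [:: 10; 24; 45];
  [:: 10; 25; 43];
  [:: 10; 26; 42];
  [:: 10; 27; 44];
  [:: 10; 28; 41];
  [:: 10; 29; 51];
  [:: 10; 30; 50];
  [:: 10; 31; 52];
  [:: 10; 32; 49];
  [:: 10; 33; 39];
  [:: 10; 34; 38];
  [:: 10; 35; 40];
  [:: 10; 36; 37];
  [:: 11; 21; 48];
  [:: 11; 22; 45];
  [:: 11; 23; 47];
  [:: 11; 24; 46];
  [:: 11; 25; 44];
  [:: 11; 26; 41];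
  [:: 11; 27; 43];
  [:: 11; 28; 42];
  [:: 11; 29; 52];
  [:: 11; 30; 49];
  [:: 11; 31; 51];
  [:: 11; 32; 50];
  [:: 11; 33; 40];
  [:: 11; 34; 37];
  [:: 11; 35; 39];
  [:: 11; 36; 38];
  [:: 12; 21; 46];
  [:: 12; 22; 47];
  [:: 12; 23; 45];
  [:: 12; 24; 48];
  [:: 12; 25; 42];
  [:: 12; 26; 43];
  [:: 12; 27; 41];
  [:: 12; 28; 44];
  [:: 12; 29; 50];
  [:: 12; 30; 51];
  [:: 12; 31; 49];
  [:: 12; 32; 52];
  [:: 12; 33; 38];
  [:: 12; 34; 39];
  [:: 12; 35; 37];
  [:: 12; 36; 40];
  [:: 13; 21; 49];
  [:: 13; 22; 52];
  [:: 13; 23; 50];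
  [:: 13; 24; 51];
  [:: 13; 25; 37];
  [:: 13; 26; 40];
  [:: 13; 27; 38];
  [:: 13; 28; 39];
  [:: 13; 29; 45];
  [:: 13; 30; 48];
  [:: 13; 31; 46];
  [:: 13; 32; 47];
  [:: 13; 33; 41];
  [:: 13; 34; 44];
  [:: 13; 35; 42];
  [:: 13; 36; 43];
  [:: 14; 21; 51];
  [:: 14; 22; 50];
  [:: 14; 23; 52];
  [:: 14; 24; 49];
  [:: 14; 25; 39];
  [:: 14; 26; 38];
  [:: 14; 27; 40];
  [:: 14; 28; 37];
  [:: 14; 29; 47];
  [:: 14; 30; 46];
  [:: 14; 31; 48];
  [:: 14; 32; 45];
  [:: 14; 33; 43];
  [:: 14; 34; 42];
  [:: 14; 35; 44];
  [:: 14; 36; 41];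
  [:: 15; 21; 52];
  [:: 15; 22; 49];
  [:: 15; 23; 51];
  [:: 15; 24; 50];
  [:: 15; 25; 40];
  [:: 15; 26; 37];
  [:: 15; 27; 39];
  [:: 15; 28; 38];
  [:: 15; 29; 48];
  [:: 15; 30; 45];
  [:: 15; 31; 47];
  [:: 15; 32; 46];
  [:: 15; 33; 44];
  [:: 15; 34; 41];
  [:: 15; 35; 43];
  [:: 15; 36; 42];
  [:: 16; 21; 50];
  [:: 16; 22; 51];
  [:: 16; 23; 49];
  [:: 16; 24; 52];
  [:: 16; 25; 38];
  [:: 16; 26; 39];
  [:: 16; 27; 37];
  [:: 16; 28; 40];
  [:: 16; 29; 46];
  [:: 16; 30; 47];
  [:: 16; 31; 45];
  [:: 16; 32; 48];
  [:: 16; 33; 42];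
  [:: 16; 34; 43];
  [:: 16; 35; 41];
  [:: 16; 36; 44];
  [:: 17; 21; 41];
  [:: 17; 22; 44];
  [:: 17; 23; 42];
  [:: 17; 24; 43];
  [:: 17; 25; 45];
  [:: 17; 26; 48];
  [:: 17; 27; 46];
  [:: 17; 28; 47];
  [:: 17; 29; 37];
  [:: 17; 30; 40];
  [:: 17; 31; 38];
  [:: 17; 32; 39];
  [:: 17; 33; 49];
  [:: 17; 34; 52];
  [:: 17; 35; 50];
  [:: 17; 36; 51];
  [:: 18; 21; 43];
  [:: 18; 22; 42];
  [:: 18; 23; 44];
  [:: 18; 24; 41];
  [:: 18; 25; 47];
  [:: 18; 26; 46];
  [:: 18; 27; 48];
  [:: 18; 28; 45];
  [:: 18; 29; 39];
  [:: 18; 30; 38];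
  [:: 18; 31; 40];
  [:: 18; 32; 37];
  [:: 18; 33; 51];
  [:: 18; 34; 50];
  [:: 18; 35; 52];
  [:: 18; 36; 49];
  [:: 19; 21; 44];
  [:: 19; 22; 41];
  [:: 19; 23; 43];
  [:: 19; 24; 42];
  [:: 19; 25; 48];
  [:: 19; 26; 45];
  [:: 19; 27; 47];
  [:: 19; 28; 46];
  [:: 19; 29; 40];
  [:: 19; 30; 37];
  [:: 19; 31; 39];
  [:: 19; 32; 38];
  [:: 19; 33; 52];
  [:: 19; 34; 49];
  [:: 19; 35; 51];
  [:: 19; 36; 50];
  [:: 20; 21; 42];
  [:: 20; 22; 43];
  [:: 20; 23; 41];
  [:: 20; 24; 44];
  [:: 20; 25; 46];
  [:: 20; 26; 47];
  [:: 20; 27; 45];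
  [:: 20; 28; 48];
  [:: 20; 29; 38];
  [:: 20; 30; 39];
  [:: 20; 31; 37];
  [:: 20; 32; 40];
  [:: 20; 33; 50];
  [:: 20; 34; 51];
  [:: 20; 35; 49];
  [:: 20; 36; 52]].

Definition FL : seq (seq nat) :=
  [:: [:: 1; 5; 9; 13; 17; 21; 25; 29; 33; 37; 41; 45; 49];
  [:: 0; 5; 6; 7; 8; 21; 22; 23; 24; 37; 38; 39; 40];
  [:: 2; 5; 10; 15; 20; 21; 26; 31; 36; 37; 42; 47; 52];
  [:: 4; 5; 12; 14; 19; 21; 28; 30; 35; 37; 44; 46; 51];
  [:: 3; 5; 11; 16; 18; 21; 27; 32; 34; 37; 43; 48; 50];
  [:: 0; 1; 2; 3; 4];
  [:: 1; 6; 10; 14; 18; 23; 27; 31; 35; 40; 44; 48; 52];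
  [:: 1; 8; 12; 16; 20; 22; 26; 30; 34; 39; 43; 47; 51];
  [:: 1; 7; 11; 15; 19; 24; 28; 32; 36; 38; 42; 46; 50];
  [:: 0; 9; 10; 11; 12; 29; 30; 31; 32; 49; 50; 51; 52];
  [:: 2; 6; 9; 16; 19; 23; 28; 29; 34; 40; 43; 46; 49];
  [:: 4; 8; 9; 15; 18; 22; 27; 29; 36; 39; 42; 48; 49];
  [:: 3; 7; 9; 14; 20; 24; 26; 29; 35; 38; 44; 47; 49];
  [:: 0; 17; 18; 19; 20; 25; 26; 27; 28; 45; 46; 47; 48];
  [:: 3; 6; 12; 15; 17; 23; 25; 30; 36; 40; 42; 45; 51];
  [:: 2; 8; 11; 14; 17; 22; 25; 32; 35; 39; 44; 45; 50];
  [:: 4; 7; 10; 16; 17; 24; 25; 31; 34; 38; 43; 45; 52];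
  [:: 0; 13; 14; 15; 16; 33; 34; 35; 36; 41; 42; 43; 44];
  [:: 4; 6; 11; 13; 20; 23; 26; 32; 33; 40; 41; 47; 50];
  [:: 3; 8; 10; 13; 19; 22; 28; 31; 33; 39; 41; 46; 52];
  [:: 2; 7; 12; 13; 18; 24; 27; 30; 33; 38; 41; 48; 51];
  [:: 0; 1; 2; 3; 4];
  [:: 1; 6; 10; 14; 18; 22; 26; 30; 34; 38; 42; 46; 50];
  [:: 1; 8; 12; 16; 20; 24; 28; 32; 36; 40; 44; 48; 52];
  [:: 1; 7; 11; 15; 19; 23; 27; 31; 35; 39; 43; 47; 51];
  [:: 0; 9; 10; 11; 12; 25; 26; 27; 28; 41; 42; 43; 44];
  [:: 2; 6; 9; 16; 19; 22; 25; 32; 35; 38; 41; 48; 51];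
  [:: 4; 8; 9; 15; 18; 24; 25; 31; 34; 40; 41; 47; 50];
  [:: 3; 7; 9; 14; 20; 23; 25; 30; 36; 39; 41; 46; 52];
  [:: 0; 17; 18; 19; 20; 33; 34; 35; 36; 49; 50; 51; 52];
  [:: 3; 6; 12; 15; 17; 22; 28; 31; 33; 38; 44; 47; 49];
  [:: 2; 8; 11; 14; 17; 24; 27; 30; 33; 40; 43; 46; 49];
  [:: 4; 7; 10; 16; 17; 23; 26; 32; 33; 39; 42; 48; 49];
  [:: 0; 13; 14; 15; 16; 29; 30; 31; 32; 45; 46; 47; 48];
  [:: 4; 6; 11; 13; 20; 22; 27; 29; 36; 38; 43; 45; 52];
  [:: 3; 8; 10; 13; 19; 24; 26; 29; 35; 40; 42; 45; 51];
  [:: 2; 7; 12; 13; 18; 23; 28; 29; 34; 39; 44; 45; 50];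
  [:: 0; 1; 2; 3; 4; 5; 6; 7; 8; 9; 10; 11; 12; 13; 14; 15; 16; 17; 18; 19; 20];
  [:: 1; 5; 9; 13; 17; 24; 28; 32; 36; 39; 43; 47; 51];
  [:: 1; 5; 9; 13; 17; 23; 27; 31; 35; 38; 42; 46; 50];
  [:: 1; 5; 9; 13; 17; 22; 26; 30; 34; 40; 44; 48; 52];
  [:: 0; 5; 6; 7; 8; 33; 34; 35; 36; 45; 46; 47; 48];
  [:: 2; 5; 10; 15; 20; 24; 27; 30; 33; 39; 44; 45; 50];
  [:: 4; 5; 12; 14; 19; 23; 26; 32; 33; 38; 43; 45; 52];
  [:: 3; 5; 11; 16; 18; 22; 28; 31; 33; 40; 42; 45; 51];
  [:: 0; 5; 6; 7; 8; 29; 30; 31; 32; 41; 42; 43; 44];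
  [:: 3; 5; 11; 16; 18; 24; 26; 29; 35; 39; 41; 46; 52];
  [:: 2; 5; 10; 15; 20; 23; 28; 29; 34; 38; 41; 48; 51];
  [:: 4; 5; 12; 14; 19; 22; 27; 29; 36; 40; 41; 47; 50];
  [:: 0; 5; 6; 7; 8; 25; 26; 27; 28; 49; 50; 51; 52];
  [:: 4; 5; 12; 14; 19; 24; 25; 31; 34; 39; 42; 48; 49];
  [:: 3; 5; 11; 16; 18; 23; 25; 30; 36; 38; 44; 47; 49];
  [:: 2; 5; 10; 15; 20; 22; 25; 32; 35; 40; 43; 46; 49];
  [:: 0; 1; 2; 3; 4; 37; 38; 39; 40; 41; 42; 43; 44; 45; 46; 47; 48; 49; 50; 51; 52];
  [:: 1; 8; 12; 16; 20; 23; 27; 31; 35; 37; 41; 45; 49];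
  [:: 1; 7; 11; 15; 19; 22; 26; 30; 34; 37; 41; 45; 49];
  [:: 1; 6; 10; 14; 18; 24; 28; 32; 36; 37; 41; 45; 49];
  [:: 0; 17; 18; 19; 20; 29; 30; 31; 32; 37; 38; 39; 40];
  [:: 2; 8; 11; 14; 17; 23; 28; 29; 34; 37; 42; 47; 52];
  [:: 4; 7; 10; 16; 17; 22; 27; 29; 36; 37; 44; 46; 51];
  [:: 3; 6; 12; 15; 17; 24; 26; 29; 35; 37; 43; 48; 50];
  [:: 0; 13; 14; 15; 16; 25; 26; 27; 28; 37; 38; 39; 40];
  [:: 3; 8; 10; 13; 19; 23; 25; 30; 36; 37; 43; 48; 50];
  [:: 2; 7; 12; 13; 18; 22; 25; 32; 35; 37; 42; 47; 52];
  [:: 4; 6; 11; 13; 20; 24; 25; 31; 34; 37; 44; 46; 51];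
  [:: 0; 9; 10; 11; 12; 33; 34; 35; 36; 37; 38; 39; 40];
  [:: 4; 8; 9; 15; 18; 23; 26; 32; 33; 37; 44; 46; 51];
  [:: 3; 7; 9; 14; 20; 22; 28; 31; 33; 37; 43; 48; 50];
  [:: 2; 6; 9; 16; 19; 24; 27; 30; 33; 37; 42; 47; 52];
  [:: 0; 1; 2; 3; 4; 21; 22; 23; 24; 25; 26; 27; 28; 29; 30; 31; 32; 33; 34; 35; 36];
  [:: 1; 7; 11; 15; 19; 21; 25; 29; 33; 40; 44; 48; 52];
  [:: 1; 6; 10; 14; 18; 21; 25; 29; 33; 39; 43; 47; 51];
  [:: 1; 8; 12; 16; 20; 21; 25; 29; 33; 38; 42; 46; 50];
  [:: 0; 13; 14; 15; 16; 21; 22; 23; 24; 49; 50; 51; 52];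
  [:: 2; 7; 12; 13; 18; 21; 26; 31; 36; 40; 43; 46; 49];
  [:: 4; 6; 11; 13; 20; 21; 28; 30; 35; 39; 42; 48; 49];
  [:: 3; 8; 10; 13; 19; 21; 27; 32; 34; 38; 44; 47; 49];
  [:: 0; 9; 10; 11; 12; 21; 22; 23; 24; 45; 46; 47; 48];
  [:: 3; 7; 9; 14; 20; 21; 27; 32; 34; 40; 42; 45; 51];
  [:: 2; 6; 9; 16; 19; 21; 26; 31; 36; 39; 44; 45; 50];
  [:: 4; 8; 9; 15; 18; 21; 28; 30; 35; 38; 43; 45; 52];
  [:: 0; 17; 18; 19; 20; 21; 22; 23; 24; 41; 42; 43; 44];
  [:: 4; 7; 10; 16; 17; 21; 28; 30; 35; 40; 41; 47; 50];
  [:: 3; 6; 12; 15; 17; 21; 27; 32; 34; 39; 41; 46; 52];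
  [:: 2; 8; 11; 14; 17; 21; 26; 31; 36; 38; 41; 48; 51]].

Definition S0 : seq nat := [:: 25; 17; 41; 47].
Definition CERT : seq (seq nat) :=
  [:: [:: 4; 40; 41; 47; 50];
  [:: 4; 7; 10; 16; 17];
  [:: 4; 24; 25; 31; 34];
  [:: 7; 21; 40];
  [:: 0; 21; 22; 23; 24];
  [:: 0; 1; 2; 3; 4];
  [:: 0; 5; 6; 7; 8];
  [:: 0; 9; 10; 11; 12];
  [:: 0; 13; 14; 15; 16];
  [:: 0; 17; 18; 19; 20];
  [:: 0; 25; 26; 27; 28];
  [:: 0; 29; 30; 31; 32];
  [:: 0; 33; 34; 35; 36];
  [:: 0; 37; 38; 39; 40];
  [:: 0; 41; 42; 43; 44];
  [:: 0; 45; 46; 47; 48];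
  [:: 0; 49; 50; 51; 52]].

Definition good2 (c s : seq nat) :=
  has (fun i => (i \in c) && has (fun j => (j != i) && (j \in c)) s) s.
Definition clos (c : seq nat) :=
  foldl (fun c s => if good2 c s then c ++ s else c) c CERT.
Definition closedb (t : seq nat) :=
  all (fun s => good2 t s ==> all (fun i => i \in t) s) BL.

Lemma F1 : all (fun s => [&& uniq s, all (fun i => i < 53) s & size s \in [:: 3; 5]]) BL.
Proof. vm_compute. reflexivity. Qed.
Lemma F2 : all (fun i => all (fun j => (i != j) ==> (count (fun s => (i \in s) && (j \in s)) BL == 1)) (iota 0 53)) (iota 0 53).
Proof. vm_compute. reflexivity. Qed.
Lemma F3 : all (fun t => [&& closedb t, has (fun i => i \notin t) (iota 0 53) & all (fun i => i < 53) t]) FL.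
Proof. vm_compute. reflexivity. Qed.
Lemma F4 : all (fun s => all (fun k => k \in flatten (filter (fun t => all (fun i => i \in t) s) FL)) (iota 0 53)) BL.
Proof. vm_compute. reflexivity. Qed.
Lemma F5 : all (fun s => s \in BL) CERT && all (fun i => i \in clos S0) (iota 0 53).
Proof. vm_compute. reflexivity. Qed.
Definition tos (s : seq nat) : {set 'I_53} := [set x : 'I_53 | nat_of_ord x \in s].
Definition BB : {set {set 'I_53}} := [set b | has (fun s => b == tos s) BL].

Lemma inBB b : reflect (exists2 s, s \in BL & b = tos s) (b \in BB).
Proof. rewrite inE; apply: (iffP hasP) => [[s Hs /eqP ->]|[s Hs ->]]; by exists s. Qed.

Lemma tosBB s : s \in BL -> tos s \in BB.
Proof. by move=> Hs; apply/inBB; exists s. Qed.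

Lemma card_tos s : uniq s -> all (fun i => i < 53) s -> #|tos s| = size s.
Proof.
move=> Us As; rewrite cardE.
have : perm_eq (map val (enum (tos s))) s.
  apply: uniq_perm => //; first by rewrite map_inj_uniq ?enum_uniq //; exact: val_inj.
  move=> i; apply/mapP/idP => [[x]|Hi]; first by rewrite mem_enum inE => Hx ->.
  have Hi53 : i < 53 by move/allP: As => /(_ i Hi).
  by exists (Ordinal Hi53) => //; rewrite mem_enum inE.
by move/perm_size; rewrite size_map.
Qed.

Lemma count1_uniq (T : eqType) (P : pred T) (L : seq T) a b :
  count P L = 1 -> a \in L -> P a -> b \in L -> P b -> a = b.
Proof.
move=> C Ha Pa Hb Pb.
have : size (filter P L) = 1 by rewrite size_filter.
case E: (filter P L) => [|c [|]] //= _.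
have : a \in filter P L by rewrite mem_filter Pa Ha.
have : b \in filter P L by rewrite mem_filter Pb Hb.
by rewrite E !inE => /eqP -> /eqP ->.
Qed.

Lemma F2' i j : i < 53 -> j < 53 -> i != j ->
  count (fun s => (i \in s) && (j \in s)) BL = 1.
Proof.
move=> Hi Hj Hij; have H := allP F2 i (etrans (mem_iota 0 53 i) Hi).
by have := allP H j (etrans (mem_iota 0 53 j) Hj); rewrite Hij => /eqP.
Qed.

Lemma BLP s : s \in BL -> [&& uniq s, all (fun i => i < 53) s & size s \in [:: 3; 5]].
Proof. exact: (allP F1 s). Qed.

Lemma block_of (x y : 'I_53) : x != y ->
  exists2 s0, s0 \in BL & [/\ nat_of_ord x \in s0, nat_of_ord y \in s0 &
    forall s, s \in BL -> nat_of_ord x \in s -> nat_of_ord y \in s -> s = s0].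
Proof.
move=> Hxy.
have Hxy' : nat_of_ord x != nat_of_ord y by [].
have C := F2' (ltn_ord x) (ltn_ord y) Hxy'.
have : has (fun s => (nat_of_ord x \in s) && (nat_of_ord y \in s)) BL by rewrite has_count C.
case/hasP => s0 Hs0 /andP [H1 H2]; exists s0 => //; split => // s Hs Hx Hy.
by apply: (count1_uniq C) => //; rewrite ?Hx ?Hy ?H1 ?H2.
Qed.

Lemma card_pairs (Q : {set 'I_53} -> bool) (x y : 'I_53) : x != y ->
  (forall s, s \in BL -> nat_of_ord x \in s -> nat_of_ord y \in s -> Q (tos s)) ->
  #|[set b in BB | Q b && ((x \in b) && (y \in b))]| = 1.
Proof.
move=> Hxy HQ; have [s0 Hs0 [H1 H2 U]] := block_of Hxy.
suff -> : [set b in BB | Q b && ((x \in b) && (y \in b))] = [set tos s0] by rewrite cards1.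
apply/setP => b; rewrite inE [b \in [set _]]inE; apply/idP/idP.
- case/andP => /inBB [s Hs ->] /andP [_]; rewrite !inE => /andP [hx hy].
  by rewrite (U s Hs hx hy).
- by move/eqP ->; rewrite tosBB // (HQ s0 Hs0 H1 H2) /= !inE H1 H2.
Qed.

Lemma FLP t : t \in FL -> [&& closedb t, has (fun i => i \notin t) (iota 0 53) & all (fun i => i < 53) t].
Proof. exact: (allP F3 t). Qed.

Lemma flat_tos t : t \in FL -> is_proper_flat BB (tos t).
Proof.
move=> /FLP /and3P [Ct Nt At]; split.
- move=> x y Hx Hy Hxy; apply: card_pairs => // s Hs hx hy.
  move: Hx Hy; rewrite !inE => Hx Hy.
  have : good2 t s.
    apply/hasP; exists (nat_of_ord x) => //; rewrite Hx /=; apply/hasP; exists (nat_of_ord y) => //.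
    by rewrite Hy andbT eq_sym; exact: Hxy.
  move/(implyP (allP Ct s Hs))/allP => Hall.
  by apply/subsetP => z; rewrite !inE => /Hall.
- case/hasP: Nt => i; rewrite mem_iota add0n => Hi Hni.
  apply/eqP => E.
  have : Ordinal Hi \in tos t by rewrite E inE.
  by rewrite inE /= (negbTE Hni).
Qed.

Lemma superset_card (T : finType) (A : {set T}) n :
  #|A| <= n -> n <= #|T| -> exists S : {set T}, #|S| = n /\ A \subset S.
Proof.
elim: n => [|n IH] h1 h2.
  by exists A; split => //; apply/eqP; rewrite -leqn0.
case: (ltngtP #|A| n.+1) h1 => // [hlt _|heq _]; last by exists A.
have [S [HS HAS]] := IH hlt (ltnW h2).
have : 0 < #|~: S|.
  by rewrite lt0n; apply/eqP => E; move: h2; rewrite -(cardsC S) E addn0 HS ltnn.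
case/card_gt0P => x; rewrite inE => Hx.
exists (x |: S); split; first by rewrite cardsU1 Hx HS.
by apply: (subset_trans HAS); apply/subsetP => z Hz; rewrite inE Hz orbT.
Qed.

Lemma flat_closed (Y : {set 'I_53}) s i j : is_flat BB Y -> s \in BL ->
  i \in s -> j \in s -> i != j -> inord i \in Y -> inord j \in Y ->
  forall k, k \in s -> (inord k : 'I_53) \in Y.
Proof.
move=> FY Hs Hi Hj Hij HiY HjY k Hk.
have /and3P [_ As _] := BLP Hs.
have Hi53 : i < 53 by move/allP: As => /(_ i Hi).
have Hj53 : j < 53 by move/allP: As => /(_ j Hj).
have Hk53 : k < 53 by move/allP: As => /(_ k Hk).
have Hxy : (inord i : 'I_53) != inord j.
  by apply: contra Hij => /eqP /(congr1 val); rewrite /= !inordK // => ->.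
have := FY _ _ HiY HjY Hxy.
move=> C; have : 0 < #|[set b in BB | (b \subset Y) && ((inord i \in b) && (inord j \in b))]|.
  by rewrite C.
case/card_gt0P => b; rewrite inE => /andP [/inBB [s' Hs' ->]] /andP [Hsub].
rewrite !inE !inordK // => /andP [hi hj].
have Hxy' : i != j := Hij.
have [s0 Hs0 [_ _ U]] := block_of Hxy.
have E1 : s' = s0 by apply: U => //; rewrite inordK.
have E2 : s = s0 by apply: U => //; rewrite inordK.
move/subsetP: Hsub => /(_ (inord k)); apply; rewrite inE inordK // E1 -E2 //.
Qed.

Lemma clos_inv (Y : {set 'I_53}) : is_flat BB Y -> forall c,
  all (fun i => (inord i : 'I_53) \in Y) c -> all (fun i => (inord i : 'I_53) \in Y) (clos c).
Proof.
move=> FY; have HC : all (fun s => s \in BL) CERT by case/andP: F5.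
rewrite /clos; move: HC; elim: CERT => [|s l IH] //= /andP [Hs Hl] c Hc.
apply: IH => //; case: ifP => // /hasP [i Hi /andP [Hic /hasP [j Hj /andP [Hji Hjc]]]].
rewrite all_cat Hc /=; apply/allP => k Hk.
apply: (flat_closed FY Hs Hi Hj _ _ _ Hk); first by rewrite eq_sym.
- exact: (allP Hc i Hic).
- exact: (allP Hc j Hjc).
Qed.

Theorem proposition3p10 :
  exists B : {set {set 'I_53}},
    is_PBD (fun k => k \in [:: 3; 5]) B /\ has_dimension B 3.
Proof.
exists BB; split.
- split.
  + move=> b /inBB [s Hs ->]; have /and3P [Us As Ss] := BLP Hs; by rewrite card_tos.
  + move=> x y Hxy; exact: (card_pairs (Q := fun _ => true) Hxy).
- split; first by rewrite card_ord.
  split.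
  + move=> S HS.
    have Hm : forall w, (w \in S) = (w \in enum S) by move=> w; rewrite mem_enum.
    have Hu := enum_uniq (mem S).
    have Hsz : size (enum S) = 3 by rewrite -cardE.
    move: Hu Hm Hsz; case E: (enum S) => [|x [|y [|z [|]]]] //= Hu Hm _.
    have Hxy : x != y.
      by move: Hu; rewrite !inE negb_or => /andP [/andP [] ].
    have [s0 Hs0 [H1 H2 _]] := block_of Hxy.
    have := allP (allP F4 s0 Hs0) (nat_of_ord z) (etrans (mem_iota 0 53 z) (ltn_ord z)).
    case/flattenP => t; rewrite mem_filter => /andP [Hst Ht] Hz.
    exists (tos t); split; first exact: flat_tos.
    apply/subsetP => w; rewrite Hm !inE => /or3P [] /eqP -> //.
    * exact: (allP Hst).
    * exact: (allP Hst).
  + move=> d Hd Hall; rewrite leqNgt; apply/negP => H4.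
    have HA : #|tos S0| = 4 by rewrite card_tos.
    have Hle : #|tos S0| <= d by rewrite HA.
    have [S [HS HAS]] := superset_card Hle Hd.
    have [Y [[FY PY] HSY]] := Hall S HS.
    move/negP: PY; apply.
    have H0 : all (fun i => (inord i : 'I_53) \in Y) S0.
      apply/allP => i Hi.
      have Hi53 : i < 53 by move: Hi; rewrite !inE => /or4P [] /eqP ->.
      have : (inord i : 'I_53) \in tos S0 by rewrite inE inordK.
      by move/(subsetP (subset_trans HAS HSY)).
    have Hc := clos_inv FY H0.
    apply/eqP/setP => w; rewrite inE.
    have Hw := allP (proj2 (andP F5)) (nat_of_ord w) (etrans (mem_iota 0 53 w) (ltn_ord w)).
    by have := allP Hc _ Hw; rewrite inord_val.
Qed.
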